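(* Assume $A=-2C$ and $0<H<1$, and let $D=D(\Gamma_1)=(1-H)(3H+1)$ and $m_{\Gamma_1}=\dfrac{2H}{H+\sqrt D+1}$. Define $$\Psi_2=-\frac{(H+1)(H-\sqrt D-3)}{2},\qquad \Psi_{-1}=\frac{(H^2-1)\big((H+1)\sqrt D-(H-1)^2+2\big)}{H^2},$$ $$\Psi_{-4}=\frac{(H+1)\sqrt D-(H-1)^2+2}{2},$$ and $$\tau_{\Gamma_1}=m_{\Gamma_1}^2\big(\Psi_2e^{2\pi C}+\Psi_{-1}e^{-\pi C}+\Psi_{-4}e^{-4\pi C}\big).$$ Let $M(y_0,t)$ be the matrix $$M(y_0,t)=S_{Y\to X}(p_0)\,e^{DY t}\,S_{X\to Y}(p_1)\,e^{DX t},$$ with $p_0=(x_0(y_0),y_0,0)$ and $p_1=(-y_0,-x_0(y_0),0)$. Then $$\lim_{y_0\to\infty,\ t\to\pi}\operatorname{tr}M(y_0,t)=\tau_{\Gamma_1}.$$ In particular, along symmetric cycles on this branch, whose half-return times tend to $\pi$, one has $\operatorname{tr}M\to\tau_{\Gamma_1}$ as $y_0\to\infty$.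
   Context: Setup. Fix real parameters $A\neq0$, $C$, $H$, $\Lambda$. Define $$X(x,y,z)=\big(Ax-H(((A-C)^2+1)z-\Lambda),\ \Lambda-(1+C^2)z,\ y+2Cz\big),$$ $$Y(x,y,z)=\big(-\Lambda-(1+C^2)z,\ Ay-H(((A-C)^2+1)z+\Lambda),\ x+2Cz\big).$$ $Z$ equals $X$ on $\{z\ge0\}$ and $Y$ on $\{z<0\}$. $\Gamma_1$ is the conic $G(x,y)=0$ in $\{z=0\}$, where $$G(x,y)=H(x^2+y^2)-(H+1)xy+\frac{2CH\Lambda(y-x)}{C^2+1}+\frac{\Lambda^2(H-1)}{C^2+1}.$$ With $k=C^2+1$, its branch is $$x_0(y)=\frac{(H+1)y}{2H}+\frac{C\Lambda}{k}+\sqrt{\frac{Dy^2}{4H^2}+\frac{C\Lambda(1-H)y}{Hk}+\frac{\Lambda^2(k-H)}{Hk^2}}.$$ The saltation matrices are $$S_{X\to Y}(p)=I+\frac{(Y-X)(p)e_3^T}{X_3(p)},\qquad S_{Y\to X}(p)=I-\frac{(Y-X)(p)e_3^T}{Y_3(p)},$$ with $e_3=(0,0,1)^T$. The saltation-corrected monodromy matrix of a symmetric cycle with half-return times $t_X=t_Y=T/2$ is $M(y_0,T/2)$. *)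

(* Defs.v *)
From HB Require Import structures.
From mathcomp Require Import all_boot all_order all_algebra.
From mathcomp Require Import all_classical all_reals all_analysis.
Set Implicit Arguments. Unset Strict Implicit. Unset Printing Implicit Defensive.
Import Order.TTheory GRing.Theory Num.Theory.
Import numFieldNormedType.Exports.
Local Open Scope ring_scope.
Local Open Scope classical_set_scope.

Section Defs.
Variable R : realType.

Definition mexp (n : nat) (M : 'M[R]_n.+1) : 'M[R]_n.+1 :=
  lim (series (fun k : nat => (k`!%:R)^-1 *: M ^+ k) @ \oo).

Definition vec3 (a b c : R) : 'cV[R]_3 :=
  \col_(i < 3) [:: a; b; c]`_i.

Definition e3 : 'cV[R]_3 := vec3 0 0 1.

Variables (A C H Lam : R).

Definition Xf (p : 'cV[R]_3) : 'cV[R]_3 :=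
  let x := p 0 0 in let y := p 1 0 in let z := p 2%:R 0 in
  vec3 (A * x - H * (((A - C) ^+ 2 + 1) * z - Lam))
       (Lam - (1 + C ^+ 2) * z)
       (y + 2 * C * z).

Definition Yf (p : 'cV[R]_3) : 'cV[R]_3 :=
  let x := p 0 0 in let y := p 1 0 in let z := p 2%:R 0 in
  vec3 (- Lam - (1 + C ^+ 2) * z)
       (A * y - H * (((A - C) ^+ 2 + 1) * z + Lam))
       (x + 2 * C * z).

(* Their (constant) Jacobian matrices DX, DY (rows = components). *)
Definition DX : 'M[R]_3 :=
  \matrix_(i < 3, j < 3)
    nth 0 (nth [::] [:: [:: A; 0; - H * ((A - C) ^+ 2 + 1)];
        [:: 0; 0; - (1 + C ^+ 2)];
        [:: 0; 1; 2 * C]] i) j.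

Definition DY : 'M[R]_3 :=
  \matrix_(i < 3, j < 3)
    nth 0 (nth [::] [:: [:: 0; 0; - (1 + C ^+ 2)];
        [:: 0; A; - H * ((A - C) ^+ 2 + 1)];
        [:: 1; 0; 2 * C]] i) j.

Definition S_XY (p : 'cV[R]_3) : 'M[R]_3 :=
  1%:M + ((Xf p) 2%:R 0)^-1 *: ((Yf p - Xf p) *m e3^T).

Definition S_YX (p : 'cV[R]_3) : 'M[R]_3 :=
  1%:M - ((Yf p) 2%:R 0)^-1 *: ((Yf p - Xf p) *m e3^T).

Definition kk : R := C ^+ 2 + 1.

Definition DG : R := (1 - H) * (3 * H + 1).

(* branch x0(y) of the conic Gamma_1 *)
Definition x0 (y : R) : R :=
  (H + 1) * y / (2 * H) + C * Lam / kk +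
  Num.sqrt (DG * y ^+ 2 / (4 * H ^+ 2) + C * Lam * (1 - H) * y / (H * kk)
            + Lam ^+ 2 * (kk - H) / (H * kk ^+ 2)).

Definition p0 (y0 : R) : 'cV[R]_3 := vec3 (x0 y0) y0 0.
Definition p1 (y0 : R) : 'cV[R]_3 := vec3 (- y0) (- x0 y0) 0.

Definition Mmono (y0 t : R) : 'M[R]_3 :=
  S_YX (p0 y0) *m mexp (t *: DY) *m S_XY (p1 y0) *m mexp (t *: DX).

Definition mG : R := 2 * H / (H + Num.sqrt DG + 1).
Definition Psi2 : R := - ((H + 1) * (H - Num.sqrt DG - 3)) / 2.
Definition Psim1 : R :=
  (H ^+ 2 - 1) * ((H + 1) * Num.sqrt DG - (H - 1) ^+ 2 + 2) / H ^+ 2.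
Definition Psim4 : R := ((H + 1) * Num.sqrt DG - (H - 1) ^+ 2 + 2) / 2.

Definition tauG : R :=
  mG ^+ 2 * (Psi2 * expR (2 * pi * C) + Psim1 * expR (- (pi * C))
             + Psim4 * expR (- (4 * pi * C))).

End Defs.

(* Main.v *)
Require Import Defs.
From HB Require Import structures.
From mathcomp Require Import all_boot all_order all_algebra.
From mathcomp Require Import all_classical all_reals all_analysis.
Import Order.TTheory GRing.Theory Num.Theory.
Import numFieldNormedType.Exports.
Local Open Scope ring_scope.
Local Open Scope classical_set_scope.
From mathcomp Require Import ring lra.
Set Implicit Arguments. Unset Strict Implicit. Unset Printing Implicit Defensive.
Lemma mx_cvg_entries (R : realType) (m n : nat) (T : Type) (F : set_system T)
  (FF : Filter F) (f : T -> 'M[R]_(m,n)) (L : 'M[R]_(m,n)) :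
  (forall i j, (fun x => f x i j) @ F --> L i j) -> f @ F --> L.
Proof.
move=> H A [P PM PA].
have : \near F, forall ij : 'I_m * 'I_n, P ij.1 ij.2 (f F ij.1 ij.2).
  apply: filter_forall => -[i j]; exact: (H i j _ (PM i j)).
by apply: filterS => x Hx; apply: PA => i j; exact: (Hx (i, j)).
Qed.

Lemma cvg_sumI (R : realType) (n : nat) (T : Type) (F : set_system T)
  (FF : Filter F) (f : 'I_n -> T -> R) (l : 'I_n -> R) :
  (forall i, f i @ F --> l i) -> (fun x => \sum_i f i x) @ F --> \sum_i l i.
Proof.
elim: n f l => [|n IH] f l H.
  rewrite big_ord0; under eq_fun do rewrite big_ord0; exact: cvg_cst.
rewrite big_ord_recr; under eq_fun do rewrite big_ord_recr.
apply: cvgD; last exact: H.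
exact: (IH (fun i => f (widen_ord (leqnSn n) i))).
Qed.

Lemma is_derive_sumI (R : realType) (n : nat) (f : 'I_n -> R -> R) (df : 'I_n -> R) (t : R) :
  (forall i, is_derive t (1:R) (f i) (df i)) ->
  is_derive t 1 (fun s => \sum_i f i s) (\sum_i df i).
Proof.
move=> H; rewrite -fct_sumE; exact: is_derive_sum.
Qed.

Section MexpGen.
Variable R : realType.
Variable M : 'M[R]_3.

Definition cf (N : nat) (i j : 'I_3) : R^nat := fun k => (M ^+ (k + N)) i j / k`!%:R.

Definition bM : R := \sum_(i < 3) \sum_(j < 3) `|M i j|.

Lemma bM_ge0 : 0 <= bM.
Proof. by apply: sumr_ge0 => i _; apply: sumr_ge0. Qed.

Lemma row_le_bM i : \sum_(l < 3) `|M i l| <= bM.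
Proof.
rewrite /bM [X in _ <= X](bigD1 i) //= lerDl; apply: sumr_ge0 => k _; exact: sumr_ge0.
Qed.

Lemma powM_bound k i j : `|(M ^+ k) i j| <= bM ^+ k.
Proof.
elim: k i j => [|k IH] i j.
  rewrite !expr0 mxE; case: (i == j); rewrite ?normr1 ?normr0 //.
rewrite exprS -mulmxE mxE (le_trans (ler_norm_sum _ _ _)) //.
apply: (@le_trans _ _ (\sum_(l < 3) `|M i l| * bM ^+ k)).
  apply: ler_sum => l _; rewrite normrM; apply: ler_wpM2l => //.
rewrite -mulr_suml exprS; apply: ler_wpM2r; last exact: row_le_bM.
exact: exprn_ge0 bM_ge0.
Qed.

Lemma cvg_pseries_cf N i j x : cvgn (pseries (cf N i j) x).
Proof.
apply: normed_cvg.
have H : cvgn (series (bM ^+ N *: exp_coeff (bM * `|x|))).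
  exact: is_cvg_seriesZ (is_cvg_series_exp_coeff _).
apply: series_le_cvg H.
- by move=> n; rewrite normr_ge0.
- move=> n /=; rewrite /exp_coeff /=; apply: mulr_ge0; first exact: exprn_ge0 bM_ge0.
  apply: divr_ge0 => //; apply: exprn_ge0; apply: mulr_ge0 => //; exact: bM_ge0.
- move=> n /=; rewrite /exp_coeff /cf /= !normrM normfV normr_nat normrX.
  have -> : (bM ^+ N *: (fun n0 : nat => (bM * `|x|) ^+ n0 / n0`!%:R)) n
    = bM ^+ N * ((bM * `|x|) ^+ n / n`!%:R) by [].
  rewrite exprMn !mulrA -exprD [(N + n)%N]addnC mulrAC.
  apply: ler_wpM2r; first by rewrite invr_ge0.
  apply: ler_wpM2r; first exact: exprn_ge0.
  by rewrite addnC; exact: powM_bound.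
Qed.

Lemma diffs_cf N i j : pseries_diffs (cf N i j) = cf N.+1 i j.
Proof.
apply/funext => k; rewrite /pseries_diffs /cf factS natrM invfM addSnnS.
have hk : (k.+1%:R : R) != 0 by rewrite pnatr_eq0.
have hf : (k`!%:R : R) != 0 by rewrite pnatr_eq0 -lt0n fact_gt0.
by rewrite mulrCA mulVKf.
Qed.

Definition gN N i j (t : R) := limn (pseries (cf N i j) t).

Lemma is_derive_gN N i j (t : R) : is_derive t (1:R) (gN N i j) (gN N.+1 i j t).
Proof.
have := @pseries_snd_diffs R (cf N i j) (`|t| + 1) t.
rewrite /gN !diffs_cf; apply.
- exact: cvg_pseries_cf.
- exact: cvg_pseries_cf.
- exact: cvg_pseries_cf.
- by rewrite [ltRHS]ger0_norm ?addr_ge0 // ltrDl.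
Qed.

Lemma gN_succ N i j t : gN N.+1 i j t = \sum_l M i l * gN N l j t.
Proof.
apply: cvg_lim => //.
have -> : pseries (cf N.+1 i j) t = (fun n => \sum_l M i l * pseries (cf N l j) t n).
  apply/funext => n; rewrite /pseries /series /=.
  under [RHS]eq_bigr do rewrite mulr_sumr.
  rewrite [RHS]exchange_big /=; apply: eq_bigr => k _.
  rewrite /cf addnS exprS -mulmxE mxE mulr_suml mulr_suml; apply: eq_bigr => l _.
  by rewrite !mulrA.
apply: cvg_sumI => l; apply: cvgMr; exact: cvg_pseries_cf.
Qed.

Lemma gN_succr N i j t : gN N.+1 i j t = \sum_l gN N i l t * M l j.
Proof.
apply: cvg_lim => //.
have -> : pseries (cf N.+1 i j) t = (fun n => \sum_l pseries (cf N i l) t n * M l j).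
  apply/funext => n; rewrite /pseries /series /=.
  under [RHS]eq_bigr do rewrite mulr_suml.
  rewrite [RHS]exchange_big /=; apply: eq_bigr => k _.
  rewrite /cf addnS exprSr -mulmxE mxE mulr_suml mulr_suml; apply: eq_bigr => l _.
  ring.
apply: cvg_sumI => l; apply: cvgMl; exact: cvg_pseries_cf.
Qed.


Definition Gm (t : R) : 'M[R]_3 := \matrix_(i, j) gN 0 i j t.

Lemma mexp_Gm t : mexp (t *: M) = Gm t.
Proof.
rewrite /mexp; apply: cvg_lim => //; apply: mx_cvg_entries => i j.
rewrite mxE.
have -> : (fun x => series (fun k : nat => k`!%:R^-1 *: (t *: M) ^+ k) x i j)
   = pseries (cf 0 i j) t.
  apply/funext => n; rewrite /pseries /series /= summxE; apply: eq_bigr => k _.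
  rewrite exprZn !mxE /cf addn0; ring.
exact: cvg_pseries_cf.
Qed.

Lemma Gm0 : Gm 0 = 1.
Proof.
apply/matrixP => i j; rewrite mxE /gN.
apply: lim_near_cst => //; near=> n.
have -> : n = n.-1.+1 by rewrite prednK //; near: n; exists 1%N.
rewrite /pseries /series /= big_nat_recl //= /cf expr0 mulr1 fact0 divr1 addn0 expr0.
rewrite big1 ?addr0 // => k _.
by rewrite expr0n /= mulr0.
Unshelve. all: by end_near.
Qed.

Lemma is_derive_Gm t i j :
  is_derive t (1:R) (fun s => Gm s i j) ((M *m Gm t) i j).
Proof.
have -> : (fun s => Gm s i j) = gN 0 i j by apply/funext => s; rewrite mxE.
have -> : (M *m Gm t) i j = gN 1 i j t.
  by rewrite gN_succ mxE; apply: eq_bigr => l _; rewrite mxE.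
exact: is_derive_gN.
Qed.

Lemma Gm_comm t : M *m Gm t = Gm t *m M.
Proof.
apply/matrixP => i j; rewrite !mxE.
transitivity (gN 1 i j t).
  by rewrite gN_succ; apply: eq_bigr => l _; rewrite mxE.
by rewrite gN_succr; apply: eq_bigr => l _; rewrite mxE.
Qed.

Lemma Gm_unique_aux (F : R -> 'M[R]_3) :
  F 0 = 1 ->
  (forall t i j, is_derive t (1:R) (fun s => F s i j) ((M *m F t) i j)) ->
  forall t, Gm (- t) *m F t = 1.
Proof.
move=> F0 dF t; apply/matrixP => i j.
pose h s := (Gm (- s) *m F s) i j.
suff -> : (Gm (- t) *m F t) i j = h 0 by rewrite /h oppr0 Gm0 F0 mul1mx.
apply: is_derive_0_is_cst => s.
have dh : forall l, is_derive s (1:R) (fun u => Gm (- u) i l * F u l j)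
   (Gm (- s) i l *: (M *m F s) l j + F s l j *: (- (M *m Gm (- s)) i l)).
  move=> l.
  apply: (@is_deriveM R R (fun u => Gm (- u) i l) (fun u => F u l j)).
  have := @is_derive1_comp R (fun u => Gm u i l) -%R s _ _ (is_derive_Gm (- s) i l)
            (is_deriveN (is_derive_id s 1)).
  by rewrite mulrN1.
have := @is_derive_sumI R 3 _ _ s dh.
have Eh : h = (fun u => \sum_l Gm (- u) i l * F u l j).
  by apply/funext => u; rewrite /h mxE.
rewrite Eh => H; apply: (trigger_derive H).
rewrite [RHS](_ : 0 = (Gm (- s) *m (M *m F s)) i j - ((M *m Gm (- s)) *m F s) i j); last first.
  by rewrite Gm_comm mulmxA subrr.
rewrite [X in _ = X - _]mxE [X in _ = _ - X]mxE -sumrB; apply: eq_bigr => l _.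
rewrite /GRing.scale /=; ring.
Qed.

Lemma Gm_unique (F : R -> 'M[R]_3) :
  F 0 = 1 ->
  (forall t i j, is_derive t (1:R) (fun s => F s i j) ((M *m F t) i j)) ->
  forall t, Gm t = F t.
Proof.
move=> F0 dF t.
have h1 := @Gm_unique_aux F F0 dF t.
have h2 := @Gm_unique_aux Gm Gm0 is_derive_Gm (- t).
rewrite opprK in h2.
have e1 : Gm t *m (Gm (-t) *m F t) = Gm t by rewrite h1; exact: mulmx1.
have e2 : Gm t *m Gm (-t) *m F t = F t by rewrite h2; exact: mul1mx.
by rewrite -{1}e1 mulmxA e2.
Qed.

End MexpGen.
Section CF. Variable R : realType.
Variables (C H : R).

Definition fx (i j : nat) (t : R) : R :=
  let E := expR (C * t) in let G := expR (- (2 * C) * t) in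
  let c := cos t in let s := sin t in
  match i, j with
  | 0, 0 => G
  | 0, 1 => H * E * c - 3 * C * H * E * s - H * G
  | 0, 2 => - (2 * C * H * E * c) - H * (3 * C ^+ 2 + 1) * E * s + 2 * C * H * G
  | 1, 1 => E * (c - C * s)
  | 1, 2 => - ((C ^+ 2 + 1) * E * s)
  | 2, 1 => E * s
  | 2, 2 => E * (c + C * s)
  | _, _ => 0
  end.

Definition sw (i : nat) : nat := match i with 0 => 1 | 1 => 0 | k => k end.
Definition fy (i j : nat) (t : R) : R := fx (sw i) (sw j) t.

Definition FXc (t : R) : 'M[R]_3 := \matrix_(i, j) fx i j t.
Definition FYc (t : R) : 'M[R]_3 := \matrix_(i, j) fy i j t.

Lemma FXc_ode t (i j : 'I_3) :
  is_derive t (1:R) (fun s => FXc s i j) ((DX (- (2 * C)) C H *m FXc t) i j).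
Proof.
have -> : (fun s => FXc s i j) = fx i j by apply/funext => s; rewrite mxE.
rewrite mxE !big_ord_recr big_ord0 /= !mxE /=.
case: i => [[|[|[|i]]] Hi] //; case: j => [[|[|[|j]]] Hj] //=; rewrite /fx /=;
  apply: trigger_derive; rewrite /GRing.scale /=; ring.
Qed.

Lemma FYc_ode t (i j : 'I_3) :
  is_derive t (1:R) (fun s => FYc s i j) ((DY (- (2 * C)) C H *m FYc t) i j).
Proof.
have -> : (fun s => FYc s i j) = fy i j by apply/funext => s; rewrite mxE.
rewrite mxE !big_ord_recr big_ord0 /= !mxE /=.
case: i => [[|[|[|i]]] Hi] //; case: j => [[|[|[|j]]] Hj] //=; rewrite /fy /fx /=;
  apply: trigger_derive; rewrite /GRing.scale /=; ring.
Qed.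

Lemma FXc0 : FXc 0 = 1.
Proof.
apply/matrixP => i j; rewrite !mxE.
case: i => [[|[|[|i]]] Hi] //; case: j => [[|[|[|j]]] Hj] //=;
  rewrite /fx /= ?mulr0 ?expR0 ?cos0 ?sin0; ring.
Qed.

Lemma FYc0 : FYc 0 = 1.
Proof.
apply/matrixP => i j; rewrite !mxE.
case: i => [[|[|[|i]]] Hi] //; case: j => [[|[|[|j]]] Hj] //=;
  rewrite /fy /fx /= ?mulr0 ?expR0 ?cos0 ?sin0; ring.
Qed.
End CF.
Lemma cvg_inv_pinfty (R : realType) : (fun y : R => y^-1) @ +oo --> (0:R).
Proof.
apply/cvgrPdist_lt => e e0.
near=> y.
rewrite sub0r normrN.
have y0 : 0 < y by near: y; apply: nbhs_pinfty_gt; rewrite num_real.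
have ye : e^-1 < y by near: y; apply: nbhs_pinfty_gt; rewrite num_real.
rewrite gtr0_norm ?invr_gt0 //.
by rewrite -(invrK e) ltf_pV2 ?posrE ?invr_gt0.
Unshelve. all: by end_near.
Qed.

Section Lims.
Variable R : realType.
Variables (C H Lam : R).
Hypothesis H0 : 0 < H.
Hypothesis H1 : H < 1.

Let s : R := Num.sqrt (DG H).
Let Lq := (H + 1 + s) / (2 * H).
Let a0 := DG H / (4 * H ^+ 2).
Let a1 := C * Lam * (1 - H) / (H * kk C).
Let a2 := Lam ^+ 2 * (kk C - H) / (H * kk C ^+ 2).

Lemma kk_gt0 : 0 < kk C.
Proof. rewrite /kk; apply: ltr_pwDr => //; exact: sqr_ge0. Qed.

Lemma s_ge0 : 0 <= s. Proof. exact: sqrtr_ge0. Qed.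

Lemma q_cvg : (fun y => x0 C H Lam y * y^-1) @ +oo --> Lq.
Proof.
have e1 : {near +oo, (fun y => (H + 1) / (2 * H) + C * Lam / kk C * y^-1
          + Num.sqrt (a0 + a1 * y^-1 + a2 * y^-1 ^+ 2)) =1 (fun y => x0 C H Lam y * y^-1)}.
  near=> y.
  have y0 : 0 < y by near: y; apply: nbhs_pinfty_gt; rewrite num_real.
  have yn : y != 0 by rewrite gt_eqF.
  have Hn : H != 0 by rewrite gt_eqF.
  have kn : kk C != 0 by rewrite gt_eqF // kk_gt0.
  rewrite /x0.
  set Q := (DG H * y ^+ 2 / (4 * H ^+ 2) + _ + _).
  have hsq : Num.sqrt Q * y^-1 = Num.sqrt (a0 + a1 * y^-1 + a2 * y^-1 ^+ 2).
    have ey : y^-1 = Num.sqrt (y^-1 ^+ 2) by rewrite sqrtr_sqr gtr0_norm ?invr_gt0.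
    rewrite {1}ey mulrC -sqrtrM ?sqr_ge0 //.
    congr (Num.sqrt _); rewrite /Q /a0 /a1 /a2; field.
    by rewrite kn Hn yn.
  rewrite /= -hsq; field.
  by rewrite kn Hn yn.
suff h2 : (fun y => (H + 1) / (2 * H) + C * Lam / kk C * y^-1
          + Num.sqrt (a0 + a1 * y^-1 + a2 * y^-1 ^+ 2)) @ +oo --> Lq.
  exact: cvg_trans (near_eq_cvg e1) h2.
have -> : Lq = (H + 1) / (2 * H) + C * Lam / kk C * 0
          + Num.sqrt (a0 + a1 * 0 + a2 * 0 ^+ 2).
  rewrite mulr0 addr0 mulr0 expr0n /= mulr0 !addr0 /Lq /a0.
  rewrite (_ : DG H / (4 * H ^+ 2) = ((2 * H)^-1) ^+ 2 * DG H); last first.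
    by field; rewrite gt_eqF.
  rewrite sqrtrM ?sqr_ge0 // sqrtr_sqr gtr0_norm ?invr_gt0 ?mulr_gt0 //.
  by rewrite -/s; field; rewrite gt_eqF.
apply: cvgD; first apply: cvgD.
- exact: cvg_cst.
- apply: cvgMr; exact: cvg_inv_pinfty.
apply: continuous_cvg; first exact: sqrt_continuous.
apply: cvgD; first apply: cvgD.
- exact: cvg_cst.
- apply: cvgMr; exact: cvg_inv_pinfty.
apply: cvgMr; apply: cvgM; exact: cvg_inv_pinfty.
Unshelve. all: by end_near.
Qed.

Lemma Lq_gt0 : 0 < Lq.
Proof.
have hs := s_ge0.
rewrite /Lq divr_gt0 //; last by rewrite mulr_gt0.
by move: H0 hs; clearbody s; lra.
Qed.

Lemma Lq_inv : Lq^-1 = mG H.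
Proof.
rewrite /Lq /mG -/s invf_div; congr (_ / _); ring.
Qed.

Definition rf y := y * (x0 C H Lam y)^-1.
Definition vf y := (x0 C H Lam y)^-1.
Definition wf y := x0 C H Lam y * (x0 C H Lam y)^-1.

Lemma r_cvg : rf @ +oo --> mG H.
Proof.
have -> : rf = (fun y => (x0 C H Lam y * y^-1)^-1).
  by apply/funext => y; rewrite /rf invfM invrK mulrC.
rewrite -Lq_inv; apply: cvgV; first by rewrite gt_eqF // Lq_gt0.
exact: q_cvg.
Qed.

Lemma v_cvg : vf @ +oo --> (0:R).
Proof.
have e1 : {near +oo, (fun y => rf y * y^-1) =1 vf}.
  near=> y.
  have y0 : 0 < y by near: y; apply: nbhs_pinfty_gt; rewrite num_real.
  by rewrite /rf /vf mulrAC mulfV ?gt_eqF // mul1r.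
suff h2 : (fun y => rf y * y^-1) @ +oo --> (0:R) by exact: cvg_trans (near_eq_cvg e1) h2.
rewrite -(mulr0 (mG H)); apply: cvgM; [exact: r_cvg | exact: cvg_inv_pinfty].
Unshelve. all: by end_near.
Qed.

Lemma w_cvg : wf @ +oo --> (1:R).
Proof.
have e1 : {near +oo, (fun y => rf y * (x0 C H Lam y * y^-1)) =1 wf}.
  near=> y.
  have y0 : 0 < y by near: y; apply: nbhs_pinfty_gt; rewrite num_real.
  rewrite /rf /wf.
  transitivity (x0 C H Lam y * (x0 C H Lam y)^-1 * (y * y^-1)); first ring.
  by rewrite [y * y^-1]mulfV ?gt_eqF // mulr1.
suff h2 : (fun y => rf y * (x0 C H Lam y * y^-1)) @ +oo --> (1:R).
  exact: cvg_trans (near_eq_cvg e1) h2.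
rewrite -(mulVf (_ : Lq != 0)); last by rewrite gt_eqF // Lq_gt0.
rewrite Lq_inv; apply: cvgM; [exact: r_cvg | exact: q_cvg].
Unshelve. all: by end_near.
Qed.
End Lims.
Section S. Variable R : realType. Variables (A C H Lam : R).
Definition SYXlin (r v w : R) : 'M[R]_3 := \matrix_(i, j) nth 0 (nth [::]
  [:: [:: 1; 0; (1 + H) * Lam * v + A * w];
      [:: 0; 1; - (A * r) + (1 + H) * Lam * v];
      [:: 0; 0; 1 - w + r]] i) j.
Definition SXYlin (r v w : R) : 'M[R]_3 := \matrix_(i, j) nth 0 (nth [::]
  [:: [:: 1; 0; - (A * r) + (1 + H) * Lam * v];
      [:: 0; 1; A * w + (1 + H) * Lam * v];
      [:: 0; 0; 1 - w + r]] i) j.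
Lemma S_YX_p0 y : S_YX A C H Lam (p0 C H Lam y) =
  SYXlin (y * (x0 C H Lam y)^-1) ((x0 C H Lam y)^-1) (x0 C H Lam y * (x0 C H Lam y)^-1).
Proof.
apply/matrixP => i j.
rewrite /S_YX /SYXlin /Xf /Yf /p0 /vec3 /e3 !mxE big_ord1 !mxE /=.
case: i => [[|[|[|i]]] Hi] //; case: j => [[|[|[|j]]] Hj] //=.
all: rewrite ?mulr0 ?addr0 ?subr0; try ring.
Qed.
Lemma S_XY_p1 y : S_XY A C H Lam (p1 C H Lam y) =
  SXYlin (y * (x0 C H Lam y)^-1) ((x0 C H Lam y)^-1) (x0 C H Lam y * (x0 C H Lam y)^-1).
Proof.
apply/matrixP => i j.
rewrite /S_XY /SXYlin /Xf /Yf /p1 /vec3 /e3 !mxE big_ord1 !mxE /=.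
case: i => [[|[|[|i]]] Hi] //; case: j => [[|[|[|j]]] Hj] //=.
all: rewrite ?mulr0 ?addr0 ?subr0 ?invrN; try ring.
Qed.
End S.

Unset Implicit Arguments. Set Strict Implicit.
Lemma cvg_mulmx_ent (R : realType) (T : Type) (F : set_system T) (FF : Filter F)
  (f g : T -> 'M[R]_3) (a b : 'M[R]_3) :
  (forall i j, (fun x => f x i j) @ F --> a i j) ->
  (forall i j, (fun x => g x i j) @ F --> b i j) ->
  forall i j, (fun x => (f x *m g x) i j) @ F --> (a *m b) i j.
Proof.
move=> hf hg i j; rewrite mxE; under eq_fun do rewrite mxE.
apply: cvg_sumI => l; apply: cvgM; [exact: hf | exact: hg].
Qed.

Lemma FXc_cont (R : realType) (C H : R) i j :
  (fun s => FXc C H s i j) @ (pi : R)^' --> FXc C H pi i j.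
Proof.
have d := FXc_ode C H pi i j.
have c : {for pi, continuous (fun s => FXc C H s i j)}.
  apply: differentiable_continuous; apply/derivable1_diffP. exact: ex_derive.
exact: cvg_within_filter c.
Qed.

Lemma FYc_cont (R : realType) (C H : R) i j :
  (fun s => FYc C H s i j) @ (pi : R)^' --> FYc C H pi i j.
Proof.
have d := FYc_ode C H pi i j.
have c : {for pi, continuous (fun s => FYc C H s i j)}.
  apply: differentiable_continuous; apply/derivable1_diffP; exact: ex_derive.
exact: cvg_within_filter c.
Qed.

Ltac limt H0 H1 := repeat first [ exact: (r_cvg _ _ H0) | exact: (v_cvg _ _ H0)
  | exact: (w_cvg _ _ H0) | exact: cvg_cst | apply: cvgD | apply: cvgB | apply: cvgMr | apply: cvgN ].

Lemma SYX_lim (R : realType) (A C H Lam : R) : 0 < H -> H < 1 -> forall i j,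
  (fun y => SYXlin A H Lam (rf C H Lam y) (vf C H Lam y) (wf C H Lam y) i j) @ +oo
   --> SYXlin A H Lam (mG H) 0 1 i j.
Proof.
move=> H0 H1 i j; rewrite mxE; under eq_fun do rewrite mxE.
case: i => [[|[|[|i]]] Hi] //; case: j => [[|[|[|j]]] Hj] //=; limt H0 H1.
Qed.

Lemma SXY_lim (R : realType) (A C H Lam : R) : 0 < H -> H < 1 -> forall i j,
  (fun y => SXYlin A H Lam (rf C H Lam y) (vf C H Lam y) (wf C H Lam y) i j) @ +oo
   --> SXYlin A H Lam (mG H) 0 1 i j.
Proof.
move=> H0 H1 i j; rewrite mxE; under eq_fun do rewrite mxE.
case: i => [[|[|[|i]]] Hi] //; case: j => [[|[|[|j]]] Hj] //=; limt H0 H1.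
Qed.

Lemma eq_by_rel (R : realType) (H rel Q x y : R) :
  H != 0 -> rel = 0 -> H ^+ 4 * (x - y) = rel * Q -> x = y.
Proof.
move=> Hn r0; rewrite r0 mul0r => /eqP; rewrite mulf_eq0 expf_eq0 (negbTE Hn) andbF /=.
by rewrite subr_eq0 => /eqP.
Qed.

Lemma final_alg (R : realType) (C H : R) : 0 < H -> H < 1 ->
  \tr (SYXlin (- (2 * C)) H 0 (mG H) 0 1 *m FYc C H pi *m
       SXYlin (- (2 * C)) H 0 (mG H) 0 1 *m FXc C H pi) = tauG C H.
Proof.
move=> H0 H1.
have Hn : H != 0 by rewrite gt_eqF.
rewrite /mxtrace; do 6 rewrite ?big_ord_recr ?big_ord0 /= ?mxE /=.
rewrite /fy /fx /= cospi sinpi.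
rewrite /tauG /Psi2 /Psim1 /Psim4.
have eG : expR (- (2 * C) * pi) = (expR (C * pi))^-1 ^+ 2.
  by rewrite (_ : - (2 * C) * pi = - (C * pi) + - (C * pi)); [rewrite expRD expRN expr2 | ring].
have e2 : expR (2 * pi * C) = expR (C * pi) ^+ 2.
  by rewrite (_ : 2 * pi * C = C * pi + C * pi); [rewrite expRD expr2 | ring].
have e1 : expR (- (pi * C)) = (expR (C * pi))^-1.
  by rewrite mulrC expRN.
have e4 : expR (- (4 * pi * C)) = (expR (C * pi))^-1 ^+ 4.
  rewrite (_ : - (4 * pi * C) = - (C * pi) + - (C * pi) + (- (C * pi) + - (C * pi))); last by ring.
  by rewrite !expRD !expRN; ring.
rewrite eG e2 e1 e4.
have En : expR (C * pi) != 0 by rewrite gt_eqF // expR_gt0.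
set E := expR (C * pi).
have DG0 : 0 <= DG H.
  rewrite /DG mulr_ge0 //; [rewrite subr_ge0 ltW // | ]; move: H0; clear; lra.
set s : R := Num.sqrt (DG H).
have s0 : 0 <= s by exact: sqrtr_ge0.
have s2 : s ^+ 2 = DG H by rewrite sqr_sqrtr.
have hmG : mG H = 2 * H / (H + s + 1) by [].
rewrite /Psi2 /Psim1 /Psim4 -/s.
clearbody s.
have den : H + s + 1 != 0.
  by rewrite gt_eqF //; move: H0 s0; clear; lra.
set m := mG H in hmG *.
have hs : s = H + 1 - 2 * H * m.
  rewrite hmG.
  have e : s * (H + s + 1) = (H + 1) * (H + s + 1) - 4 * H ^+ 2.
    rewrite (_ : s * (H + s + 1) = s * H + s ^+ 2 + s); last by ring.
    by rewrite s2 /DG; ring.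
  apply: (mulIf den); rewrite e; field.
  by rewrite den.
have hrel : H * m ^+ 2 - (H + 1) * m + H = 0.
  have : 4 * H * (H * m ^+ 2 - (H + 1) * m + H) = s ^+ 2 - DG H.
    by rewrite hs /DG; ring.
  rewrite s2 subrr => /eqP; rewrite mulf_eq0 mulf_eq0 (negbTE Hn) orbF => /orP [|/eqP //].
  by rewrite pnatr_eq0.
rewrite hs.
apply: (@eq_by_rel _ H _ (E^-1 ^+ 4 * H ^+ 5 - 2 * E^-1 * H ^+ 3 + 2 * E^-1 * H ^+ 5 + E ^+ 2 * H ^+ 5
  + m * (E^-1 ^+ 4 * H ^+ 4 + E^-1 ^+ 4 * H ^+ 5 - 2 * E^-1 * H ^+ 2 - 2 * E^-1 * H ^+ 3
         + 2 * E^-1 * H ^+ 4 + 2 * E^-1 * H ^+ 5 + E ^+ 2 * H ^+ 4 + E ^+ 2 * H ^+ 5)) _ _ Hn hrel).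
field.
by rewrite En Hn.
Qed.

Theorem mainTheorem12 (R : realType) (A C H Lam : R) :
  A != 0 -> A = - (2 * C) -> 0 < H -> H < 1 ->
  (fun yt : R * R => \tr (Mmono A C H Lam yt.1 yt.2))
    @ filter_prod (pinfty_nbhs R) (dnbhs (pi : R))
    --> tauG C H.
Proof.
move=> _ -> H0 H1.
have eX t : mexp (t *: DX (- (2 * C)) C H) = FXc C H t.
  by rewrite mexp_Gm; apply: Gm_unique; [exact: FXc0 | exact: FXc_ode].
have eY t : mexp (t *: DY (- (2 * C)) C H) = FYc C H t.
  by rewrite mexp_Gm; apply: Gm_unique; [exact: FYc0 | exact: FYc_ode].
have -> : (fun yt : R * R => \tr (Mmono (- (2 * C)) C H Lam yt.1 yt.2)) =
  (fun yt => \tr (SYXlin (- (2 * C)) H Lam (rf C H Lam yt.1) (vf C H Lam yt.1) (wf C H Lam yt.1)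
     *m FYc C H yt.2 *m SXYlin (- (2 * C)) H Lam (rf C H Lam yt.1) (vf C H Lam yt.1) (wf C H Lam yt.1)
     *m FXc C H yt.2)).
  by apply/funext => yt; rewrite /Mmono S_YX_p0 S_XY_p1 eX eY.
have -> : tauG C H = \tr (SYXlin (- (2 * C)) H Lam (mG H) 0 1 *m FYc C H pi *m
       SXYlin (- (2 * C)) H Lam (mG H) 0 1 *m FXc C H pi).
  rewrite -(@final_alg R C H H0 H1); congr (\tr (_ *m _ *m _ *m _)).
  - apply/matrixP => i j; rewrite !mxE.
    by case: i => [[|[|[|i]]] Hi] //; case: j => [[|[|[|j]]] Hj] //=; rewrite !mulr0.
  - apply/matrixP => i j; rewrite !mxE.
    by case: i => [[|[|[|i]]] Hi] //; case: j => [[|[|[|j]]] Hj] //=; rewrite !mulr0.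
rewrite /mxtrace; apply: cvg_sumI => i.
apply: cvg_mulmx_ent; last first.
  move=> i' j'; exact: (cvg_comp _ _ cvg_snd (@FXc_cont R C H i' j')).
apply: cvg_mulmx_ent; last first.
  move=> i' j'; exact: (cvg_comp _ _ cvg_fst (@SXY_lim R _ C H Lam H0 H1 i' j')).
apply: cvg_mulmx_ent; last first.
  move=> i' j'; exact: (cvg_comp _ _ cvg_snd (@FYc_cont R C H i' j')).
move=> i' j'; exact: (cvg_comp _ _ cvg_fst (@SYX_lim R _ C H Lam H0 H1 i' j')).
Qed.
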